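(* Let $\Gamma$ be a semigroup with identity $e$, $\rho:\Gamma\to\mathrm{End}(G)$ an endomorphism action with $\rho(e)=\mathrm{Id}$ on a solenoid $G$, and $A$ a $\rho$-basis of $\widehat G$. Then: (1) $\rho$ is expansive if and only if $B_A(\epsilon)=\{e\}$ for some $\epsilon>0$; (2) $\rho_e$ has a non-trivial bounded orbit in $L(G)$ (i.e. some $p\ne 0$ with $\{\rho_e(\gamma)p:\gamma\in\Gamma\}$ bounded) if and only if $B^*_A(C)\ne\{0\}$ for some $C>0$.
   Context: A solenoid is a compact connected finite-dimensional metrizable abelian group (dual $\widehat G$ torsion-free of finite rank). $L(G)$ is the real vector space of homomorphisms $\widehat G\to\mathbb R$; $\widehat\rho(\gamma)(\chi)=\chi\circ\rho(\gamma)$ and $\rho_e(\gamma)(p)(\chi)=p(\chi\circ\rho(\gamma))$. A $\rho$-basis is a set $A\subset\widehat G$ generating $\widehat G$ as an abelian group with $A=\bigcup_{\gamma}\widehat\rho(\gamma)(F)$ for some finite $F\subset\widehat G$. Let $\delta:\mathbb S^1\to\mathbb R$, $\delta(z)=\inf\{|t|:t\in\mathbb R,e^{2\pi it}=z\}$. For $A\subset\widehat G$ and $r>0$: $B_A(r)=\{g\in G:\sup_{\chi\in A}\delta(\chi(g))<r\}$ and $B^*_A(r)=\{p\in L(G):\sup_{\chi\in A}|p(\chi)|<r\}$. The action is expansive if there is a neighborhood $U$ of the identity with $\bigcap_{\gamma}\rho(\gamma)^{-1}(U)=\{e\}$. *)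

(* Defs.v *)
From mathcomp Require Import all_boot all_order all_algebra.
From mathcomp Require Import all_classical all_reals all_analysis.
Set Implicit Arguments. Unset Strict Implicit. Unset Printing Implicit Defensive.
Import Order.TTheory GRing.Theory Num.Theory.
Local Open Scope classical_set_scope.
Local Open Scope ring_scope.

(* The solenoid G is represented through Pontryagin duality as the group of
   homomorphisms from its (discrete) dual D = \hat G into the circle
   T = R/Z, with the topology of pointwise convergence.  The circle is
   represented by the half-open interval [0,1) with addition mod 1; the point
   t of [0,1) stands for e^{2 pi i t}. *)

Section Defs.
Variable R : realType.

Definition frac (x : R) : R := x - (Num.floor x)%:~R.

Definition delta (t : R) : R :=
  inf [set `|s| | s in [set s : R | (s - t) \is a Num.int]].

Variable D : zmodType.

Definition torsion_free : Prop :=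
  forall (n : nat) (x : D), (0 < n)%N -> x *+ n = 0 -> x = 0.

Inductive gen_subgroup (A : set D) : D -> Prop :=
  | gen_base x : A x -> gen_subgroup A x
  | gen_zero : gen_subgroup A 0
  | gen_sub x y : gen_subgroup A x -> gen_subgroup A y -> gen_subgroup A (x - y).

(* D has finite rank: some finite family is maximal Z-independent, i.e.
   every element has a nonzero multiple in the subgroup it generates *)
Definition finite_rank : Prop :=
  exists s : seq D, forall x : D,
    exists2 n : nat, (0 < n)%N & gen_subgroup [set y | y \in s] (x *+ n).

Definition solG : set (D -> R) :=
  [set g | (forall x, 0 <= g x < 1) /\ (forall a b, g (a + b) = frac (g a + g b))].

Definition solG_e : D -> R := fun _ => 0.

Definition LG : set (D -> R) :=
  [set p | forall a b, p (a + b) = p a + p b].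

(* the dual endomorphisms rhohat gamma : D -> D determine
   rho(gamma)(g) = g o rhohat(gamma)  and  rho_e(gamma)(p) = p o rhohat(gamma) *)
Definition rho_act (Gam : Type) (rhohat : Gam -> D -> D) (gam : Gam) (g : D -> R)
  : D -> R := fun x => g (rhohat gam x).

(* neighbourhood of the identity in G (product/pointwise topology) *)
Definition nbhd_e (U : set (D -> R)) : Prop :=
  U `<=` solG /\
  exists (F : seq D) (r : R), 0 < r /\
    forall g, solG g -> (forall x, x \in F -> delta (g x) < r) -> U g.

Definition expansive (Gam : Type) (rhohat : Gam -> D -> D) : Prop :=
  exists U, nbhd_e U /\
    [set g | solG g /\ forall gam, U (rho_act rhohat gam g)] = [set solG_e].

Definition rho_basis (Gam : Type) (rhohat : Gam -> D -> D) (A : set D) : Prop :=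
  (forall x, gen_subgroup A x) /\
  exists F : seq D, forall x, A x <-> exists gam, exists2 f, f \in F & x = rhohat gam f.

Local Open Scope ereal_scope.
Definition B_A (A : set D) (r : R) : set (D -> R) :=
  [set g | solG g /\ ereal_sup [set (delta (g x))%:E | x in A] < r%:E].

Definition Bstar_A (A : set D) (r : R) : set (D -> R) :=
  [set p | LG p /\ ereal_sup [set (`|p x|)%R%:E | x in A] < r%:E].
Local Close Scope ereal_scope.

Definition bounded_orbit (Gam : Type) (rhohat : Gam -> D -> D) (p : D -> R) : Prop :=
  forall x : D, exists M : R, forall gam, `|rho_act rhohat gam p x| <= M.

End Defs.

(* Main.v *)
Require Import Defs.
From mathcomp Require Import all_boot all_order all_algebra.
From mathcomp Require Import all_classical all_reals all_analysis.
From mathcomp Require Import lra.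
From Stdlib Require Import Classical.
Import Order.TTheory GRing.Theory Num.Theory.
Local Open Scope classical_set_scope.
Local Open Scope ring_scope.

Section Aux.
Variable R : realType.

Lemma delta_le (t s : R) : s - t \is a Num.int -> delta t <= `|s|.
Proof.
move=> hs; apply: ge_inf; last by exists s.
by exists 0 => y [s' _ <-].
Qed.

Lemma delta_ge0 (t : R) : 0 <= delta t.
Proof.
apply: lb_le_inf; first by exists `|t|, t => //=; rewrite subrr.
by move=> y [s _ <-].
Qed.

Lemma delta_int (t t' : R) : t - t' \is a Num.int -> delta t <= delta t'.
Proof.
move=> h; apply: lb_le_inf; first by exists `|t'|, t' => //=; rewrite subrr.
move=> y [s /= hs <-]; apply: delta_le.
have -> : s - t = (s - t') - (t - t') by rewrite opprB addrA subrK.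
by rewrite rpredB.
Qed.

Lemma delta_opp (t : R) : delta (- t) <= delta t.
Proof.
apply: lb_le_inf; first by exists `|t|, t => //=; rewrite subrr.
move=> y [s /= hs <-]; rewrite -normrN; apply: delta_le.
by rewrite -opprD rpredN.
Qed.

Lemma delta_add (t1 t2 : R) : delta (t1 + t2) <= delta t1 + delta t2.
Proof.
have H1 : forall s1, s1 - t1 \is a Num.int -> delta (t1 + t2) - `|s1| <= delta t2.
  move=> s1 h1; apply: lb_le_inf; first by exists `|t2|, t2 => //=; rewrite subrr.
  move=> y [s2 /= h2 <-].
  have : delta (t1 + t2) <= `|s1 + s2|.
    apply: delta_le.
    have -> : s1 + s2 - (t1 + t2) = (s1 - t1) + (s2 - t2)
      by rewrite opprD addrACA.
    by rewrite rpredD.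
  have := ler_normD s1 s2; lra.
have : delta (t1 + t2) - delta t2 <= delta t1.
  apply: lb_le_inf; first by exists `|t1|, t1 => //=; rewrite subrr.
  move=> y [s1 /= h1 <-]; have := H1 s1 h1; lra.
lra.
Qed.

Lemma frac_int (x : R) : Defs.frac x - x \is a Num.int.
Proof. by rewrite /Defs.frac addrAC subrr add0r rpredN intr_int. Qed.

Variable D : zmodType.

Definition addmodZ (h : D -> R) :=
  forall a b, h (a + b) - (h a + h b) \is a Num.int.

Lemma addmodZ_0 h : addmodZ h -> delta (h 0) <= 0.
Proof.
move=> hh; have := @delta_le (h 0) 0.
rewrite normr0; apply; have := hh 0 0; rewrite addr0.
have -> : h 0 - (h 0 + h 0) = 0 - h 0 by rewrite opprD addrA subrr.
by [].
Qed.

Lemma addmodZ_sub h : addmodZ h -> forall x y,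
  delta (h (x - y)) <= delta (h x) + delta (h y).
Proof.
move=> hh x y.
have E : h (x - y) - (h x + - h y) \is a Num.int.
  have := hh (x - y) y; rewrite subrK => H.
  have -> : h (x - y) - (h x + - h y) = - (h x - (h (x - y) + h y)).
    by rewrite !opprD !opprK; lra.
  by rewrite rpredN.
have := @delta_int _ _ E; have := delta_add (h x) (- h y); have := delta_opp (h y).
lra.
Qed.

Lemma gen_bound (A : set D) z : gen_subgroup A z -> exists N : nat,
  forall (phi : D -> R) (c : R), 0 <= c -> phi 0 <= 0 ->
  (forall x y, phi (x - y) <= phi x + phi y) ->
  (forall a, A a -> phi a <= c) -> phi z <= N%:R * c.
Proof.
elim => [x Ax | | x y _ [N1 H1] _ [N2 H2]].
- by exists 1%N => phi c _ _ _ H; rewrite mul1r; apply: H.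
- by exists 0%N => phi c _ H0 _ _; rewrite mul0r.
- exists (N1 + N2)%N => phi c c0 p0 ps pa.
  have := H1 phi c c0 p0 ps pa; have := H2 phi c c0 p0 ps pa; have := ps x y.
  rewrite natrD mulrDl; lra.
Qed.

Lemma gen_bound_seq (A : set D) (F : seq D) : (forall z, gen_subgroup A z) ->
  exists N : nat, forall z, z \in F ->
  forall (phi : D -> R) (c : R), 0 <= c -> phi 0 <= 0 ->
  (forall x y, phi (x - y) <= phi x + phi y) ->
  (forall a, A a -> phi a <= c) -> phi z <= N%:R * c.
Proof.
move=> hg; elim: F => [|z F [NF HF]]; first by exists 0%N.
have [Nz Hz] := @gen_bound _ _ (hg z).
exists (Nz + NF)%N => w; rewrite inE => /orP[/eqP ->|wF] phi c c0 p0 ps pa.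
- have := Hz phi c c0 p0 ps pa; have : 0 <= NF%:R * c by rewrite mulr_ge0.
  rewrite natrD mulrDl; lra.
- have := HF w wF phi c c0 p0 ps pa; have : 0 <= Nz%:R * c by rewrite mulr_ge0.
  rewrite natrD mulrDl; lra.
Qed.

End Aux.
Arguments addmodZ {R D}.
Arguments addmodZ_0 {R D h}.
Arguments addmodZ_sub {R D h}.
Arguments frac_int {R}.
Arguments gen_bound {R D A z}.
Arguments gen_bound_seq {R D A} F.

Theorem proposition4p5 (R : realType) (D : zmodType)
  (Gam : Type) (mul : Gam -> Gam -> Gam) (e : Gam)
  (rhohat : Gam -> D -> D) (A : set D) :
  torsion_free D -> finite_rank D ->
  (forall a b c, mul a (mul b c) = mul (mul a b) c) ->
  (forall a, mul e a = a) -> (forall a, mul a e = a) ->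
  (forall gam, forall x y, rhohat gam (x + y) = rhohat gam x + rhohat gam y) ->
  (forall x, rhohat e x = x) ->
  (forall g1 g2 x, rhohat (mul g1 g2) x = rhohat g2 (rhohat g1 x)) ->
  rho_basis rhohat A ->
  (@expansive R D Gam rhohat <->
     exists2 eps : R, 0 < eps & B_A A eps = [set @solG_e R D]) /\
  ((exists p, LG p /\ p <> (fun _ => 0) /\ @bounded_orbit R D Gam rhohat p) <->
     exists2 C : R, 0 < C & Bstar_A A C <> [set (fun _ => 0)]).
Proof.
move=> _ _ _ _ _ Hadd _ Hcomp [Hgen [F0 HF0]].
have Ainv : forall gam a, A a -> A (rhohat gam a).
  move=> gam a /HF0 [gam' [f hf ->]]; apply/HF0.
  by exists (mul gam' gam), f => //; rewrite Hcomp.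
have solGe : solG (@solG_e R D).
  by split => [x|a b]; rewrite /solG_e ?lexx ?ltr01 // /Defs.frac addr0 floor0 subr0.
have d0 : delta (0 : R) <= 0 by have := @delta_le R 0 0; rewrite subr0 normr0; apply; rewrite rpred0.
have rsol : forall (g : D -> R) gam, solG g -> solG (rho_act rhohat gam g).
  move=> g gam; rewrite /solG /= => -[g1 g2]; split => [x|a b]; first exact: g1.
  by rewrite /rho_act Hadd g2.
have rmod : forall (g : D -> R) gam, solG g -> addmodZ (rho_act rhohat gam g).
  move=> g gam; rewrite /solG /= => -[_ g2] a b; rewrite /rho_act Hadd g2; exact: frac_int.
split.
  split.
  - move=> [U [[Usol [F [r [r0 HU]]]] Heq]].
    have [N HN] := @gen_bound_seq R D A F Hgen.
    have N1 : 0 < (N.+1)%:R :> R by rewrite ltr0n.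
    pose eps := r / (N.+1)%:R.
    have eps0 : 0 < eps by rewrite divr_gt0.
    exists eps => //; apply/seteqP; split => g.
    + move=> [sg hsup].
      have : [set g | solG g /\ forall gam, U (rho_act rhohat gam g)] g.
        split => // gam; apply: HU; first exact: rsol.
        move=> x xF.
        have := HN x xF (fun z => delta (rho_act rhohat gam g z)) eps (ltW eps0)
          (addmodZ_0 (rmod g gam sg)) (addmodZ_sub (rmod g gam sg)).
        have HA : forall a, A a -> delta (rho_act rhohat gam g a) <= eps.
          move=> a Aa; apply: ltW; rewrite -lte_fin; apply: le_lt_trans hsup.
          by apply: ereal_sup_ubound; exists (rhohat gam a) => //; apply: Ainv.
        move=> /(_ HA) H; apply: (le_lt_trans H).
        have E : eps * (N.+1)%:R = r by rewrite /eps mulfVK // gt_eqF.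
        have : 0 <= N%:R :> R by [].
        move: E; rewrite -natr1 => E Nge.
        nra.
      by rewrite Heq.
    + move=> ->; split => //; apply: le_lt_trans (lte_tofin eps0).
      by apply: ge_ereal_sup => _ [x _ <-]; rewrite lee_fin.
  - move=> [eps eps0 Heq].
    have e2 : 0 < eps / 2 by rewrite divr_gt0.
    exists [set g | solG g /\ forall x, x \in F0 -> delta (g x) < eps / 2].
    split; first by split => [g []//|]; exists F0, (eps / 2).
    apply/seteqP; split => g.
    + move=> [sg hU].
      have : B_A A eps g.
        split => //; apply: le_lt_trans (_ : ((eps / 2)%:E < eps%:E)%E).
          apply: ge_ereal_sup => _ [x Ax <-]; rewrite lee_fin.
          have [gam [f hf Ex]] := (HF0 x).1 Ax.
          have [_ /(_ f hf)] := hU gam; rewrite /rho_act -Ex; exact: ltW.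
        rewrite lte_fin; lra.
      by rewrite Heq.
    + move=> -> /=; split => // gam; split => //.
      by move=> x _; rewrite /rho_act /solG_e; apply: le_lt_trans d0 e2.
have rh0 : forall gam, rhohat gam 0 = 0.
  move=> gam; have h := Hadd gam 0 0; rewrite addr0 in h.
  have : rhohat gam 0 - rhohat gam 0 = rhohat gam 0 by rewrite {1}h addrK.
  by rewrite subrr.
have rhB : forall gam x y, rhohat gam (x - y) = rhohat gam x - rhohat gam y.
  move=> gam x y; have h := Hadd gam (x - y) y; rewrite subrK in h.
  by rewrite h addrK.
have LG0 : forall p : D -> R, LG p -> p 0 = 0.
  move=> p Lp; have h := Lp 0 0; rewrite addr0 in h.
  have : p 0 - p 0 = p 0 by rewrite {1}h addrK.
  by rewrite subrr.
have LGB : forall p : D -> R, LG p -> forall x y, p (x - y) = p x - p y.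
  move=> p Lp x y; have h := Lp (x - y) y; rewrite subrK in h.
  by rewrite h addrK.
split.
- move=> [p [Lp [pn0 hb]]].
  have [M [M0 HM]] : exists M : R, 0 <= M /\ forall f, f \in F0 ->
      forall gam, `|rho_act rhohat gam p f| <= M.
    elim: F0 {HF0} => [|f F [MF [MF0 HF]]]; first by exists 0.
    have [Mf HMf] := hb f.
    exists (Num.max (Num.max Mf MF) 0); split; first by rewrite le_max lexx orbT.
    move=> w; rewrite inE => /orP[/eqP ->|wF] gam.
    + by rewrite !le_max (HMf gam).
    + by rewrite !le_max (HF w wF gam) orbT.
  exists (M + 1); first lra.
  move=> Heq; have : Bstar_A A (M + 1) p.
    split => //; apply: le_lt_trans (_ : (M%:E < (M + 1)%:E)%E).
      apply: ge_ereal_sup => _ [x Ax <-]; rewrite lee_fin.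
      have [gam [f hf ->]] := (HF0 x).1 Ax; exact: HM.
    rewrite lte_fin; lra.
  by rewrite Heq.
- move=> [C C0 Hne].
  have [[p [[Lp hsup] pn0]]|H] := classic (exists p, Bstar_A A C p /\ p <> (fun _ => 0)).
  + exists p; split => //; split => // x.
    have [N HN] := @gen_bound R D A x (Hgen x).
    exists (N%:R * C) => gam.
    apply: (HN (fun z => `|rho_act rhohat gam p z|) C (ltW C0)).
    * by rewrite /rho_act rh0 LG0 // normr0.
    * by move=> a b; rewrite /rho_act rhB LGB //; exact: ler_normB.
    * move=> a Aa; apply: ltW; rewrite -lte_fin; apply: le_lt_trans hsup.
      by apply: ereal_sup_ubound; exists (rhohat gam a) => //; apply: Ainv.
  + exfalso; apply: Hne; apply/seteqP; split => p.
    * move=> Hp; apply: NNPP => hp; apply: H; exists p; split => //.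
    * move=> -> /=; split; first by move=> a b; rewrite addr0.
      apply: le_lt_trans (lte_tofin C0).
      by apply: ge_ereal_sup => _ [x _ <-]; rewrite normr0 lee_fin.
Qed.
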